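(* Let $\nu>0$, $\sigma>0$, $\varepsilon\in(-1,1)$ be fixed (known) and let $\rho(u)=\frac{\nu+1}{2}\log\big(1+\frac{u^2}{\nu(1-\operatorname{sign}(u)\varepsilon)^2}\big)$. For a sample $x_1,\dots,x_n$, let $T_n(x_1,\dots,x_n)$ be any minimizer over $t\in\mathbb{R}$ of $\sum_{i=1}^n\rho\big(\frac{x_i-t}{\sigma}\big)$ (the ML estimator of the location $\theta$ in $ESt(\theta,\sigma,\varepsilon,\nu)$ with $\sigma,\varepsilon,\nu$ known). Then the breakdown point of $T_n$ is $1/2$, in the sense that its finite-sample replacement breakdown point tends to $1/2$ as $n\to\infty$.
   Context: $\operatorname{sign}(t)=1$ for $t\ge0$, $-1$ for $t<0$. $\rho$ equals $-\log f_{ESt}$ up to an additive constant, where $f_{ESt}(x)\propto\big(1+\frac{(x-\theta)^2}{\nu(1-\operatorname{sign}(x-\theta)\varepsilon)^2\sigma^2}\big)^{-(\nu+1)/2}$. The finite-sample replacement breakdown point of $T_n$ at a sample $X$ is $\min\{m/n:\ \sup|T_n(X')|=\infty\}$, the supremum over all samples $X'$ obtained from $X$ by replacing $m$ of the $n$ points by arbitrary values. *)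

(* Defs.v *)
From Stdlib Require Import Reals Lra List.
Open Scope R_scope.

Definition sgn (t : R) : R := if Rle_dec 0 t then 1 else -1.

Definition rho (nu eps u : R) : R :=
  (nu + 1) / 2 * ln (1 + u ^ 2 / (nu * (1 - sgn u * eps) ^ 2)).

Definition objective (nu sigma eps : R) (x : list R) (t : R) : R :=
  fold_right (fun xi acc => rho nu eps ((xi - t) / sigma) + acc) 0 x.

Definition is_minimizer (nu sigma eps : R) (x : list R) (t : R) : Prop :=
  forall s : R, objective nu sigma eps x t <= objective nu sigma eps x s.

Fixpoint num_diff (x y : list R) : nat :=
  match x, y with
  | a :: x', b :: y' => ((if Req_EM_T a b then 0 else 1) + num_diff x' y')%nat
  | _, _ => 0%nat
  end.

Definition replacement (X X' : list R) (m : nat) : Prop :=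
  length X' = length X /\ (num_diff X X' <= m)%nat.

Definition breaks (T : list R -> R) (X : list R) (m : nat) : Prop :=
  forall M : R, exists X', replacement X X' m /\ M < Rabs (T X').

(* m is the least number of replaced points causing breakdown; the
   finite-sample replacement breakdown point is then m / length X *)
Definition breakdown_count (T : list R -> R) (X : list R) (m : nat) : Prop :=
  breaks T X m /\ forall k, (k < m)%nat -> ~ breaks T X k.

(* Main.v *)
Require Import Defs.
From Stdlib Require Import Reals Lra List Arith Lia Classical ClassicalEpsilon.
Open Scope R_scope.

Lemma ln_le' x y : 0 < x -> x <= y -> ln x <= ln y.
Proof.
  intros Hx Hxy; destruct (Rle_lt_or_eq_dec _ _ Hxy) as [H|H].
  - left; apply ln_increasing; auto.
  - subst; right; reflexivity.
Qed.

Definition cc (nu : R) := (nu + 1) / 2.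
Definition ww (nu sigma : R) := 4 * sigma ^ 2 * nu.
Definition s0 (eps : R) := Rmin (1 - eps) (1 + eps).
Definition hh (nu sigma : R) (u : R) := cc nu * ln (1 + u ^ 2 / ww nu sigma).
Definition rt (nu sigma eps : R) (u : R) := rho nu eps (u / sigma).
Definition DD (nu eps : R) := cc nu * ln (4 / s0 eps ^ 2).
Definition KK (nu eps : R) := cc nu * ln 2 + DD nu eps.

Lemma cc_pos nu : 0 < nu -> 0 < cc nu.
Proof. intros; unfold cc; lra. Qed.

Lemma ww_pos nu sigma : 0 < nu -> 0 < sigma -> 0 < ww nu sigma.
Proof. intros; unfold ww. apply Rmult_lt_0_compat; auto. apply Rmult_lt_0_compat; [lra|]. apply pow_lt; auto. Qed.

Lemma s0_bounds eps : -1 < eps < 1 -> 0 < s0 eps <= 1.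
Proof. intros; unfold s0, Rmin; destruct Rle_dec; lra. Qed.

Lemma DD_nonneg nu eps : 0 < nu -> -1 < eps < 1 -> 0 <= DD nu eps.
Proof.
  intros Hnu He; unfold DD. apply Rmult_le_pos; [left; apply cc_pos; auto|].
  destruct (s0_bounds eps He) as [H1 H2].
  rewrite <- ln_1; apply ln_le'; [lra|].
  unfold Rdiv; apply (Rmult_le_reg_r (s0 eps ^ 2)); [nra|].
  rewrite Rmult_assoc, Rinv_l by nra. nra.
Qed.

Lemma KK_nonneg nu eps : 0 < nu -> -1 < eps < 1 -> 0 <= KK nu eps.
Proof.
  intros; unfold KK. pose proof (DD_nonneg nu eps H H0).
  assert (0 <= ln 2) by (rewrite <- ln_1; apply ln_le'; lra).
  pose proof (cc_pos nu H). nra.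
Qed.

Lemma ln1p_nonneg x : 0 <= x -> 0 <= ln (1 + x).
Proof. intros; rewrite <- ln_1; apply ln_le'; lra. Qed.

Lemma hh_nonneg nu sigma u : 0 < nu -> 0 < sigma -> 0 <= hh nu sigma u.
Proof.
  intros; unfold hh. apply Rmult_le_pos; [left; apply cc_pos; auto|].
  apply ln1p_nonneg. unfold Rdiv; apply Rmult_le_pos; [nra|].
  left; apply Rinv_0_lt_compat, ww_pos; auto.
Qed.

Lemma hh_even nu sigma u : hh nu sigma (- u) = hh nu sigma u.
Proof. unfold hh; replace ((- u) ^ 2) with (u ^ 2) by ring; reflexivity. Qed.

Lemma hh_sub nu sigma a b : 0 < nu -> 0 < sigma ->
  hh nu sigma (a + b) <= hh nu sigma a + hh nu sigma b + cc nu * ln 2.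
Proof.
  intros Hnu Hs; unfold hh.
  pose proof (ww_pos nu sigma Hnu Hs) as Hw.
  set (w := ww nu sigma) in *.
  assert (Hp : 0 <= a ^ 2 / w) by (unfold Rdiv; apply Rmult_le_pos; [apply pow2_ge_0| left; apply Rinv_0_lt_compat; auto]).
  assert (Hq : 0 <= b ^ 2 / w) by (unfold Rdiv; apply Rmult_le_pos; [apply pow2_ge_0| left; apply Rinv_0_lt_compat; auto]).
  assert (Hab : (a + b) ^ 2 / w <= 2 * (a ^ 2 / w) + 2 * (b ^ 2 / w)).
  { unfold Rdiv. pose proof (Rinv_0_lt_compat w Hw).
    assert ((a+b)^2 <= 2 * a^2 + 2*b^2) by (pose proof (pow2_ge_0 (a - b)); nra).
    replace (2 * (a ^ 2 * / w) + 2 * (b ^ 2 * / w)) with ((2 * a^2 + 2*b^2) * / w) by ring.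
    apply Rmult_le_compat_r; lra. }
  assert (ln (1 + (a + b) ^ 2 / w) <= ln (1 + a ^ 2 / w) + ln (1 + b ^ 2 / w) + ln 2).
  { assert (Hr : 0 <= (a + b) ^ 2 / w) by (unfold Rdiv; apply Rmult_le_pos; [apply pow2_ge_0| left; apply Rinv_0_lt_compat; auto]).
    pose proof (Rmult_le_pos _ _ Hp Hq).
    rewrite <- !ln_mult by nra. apply ln_le'; nra. }
  pose proof (cc_pos nu Hnu). nra.
Qed.

Lemma hh_mono nu sigma a b : 0 < nu -> 0 < sigma -> Rabs a <= Rabs b ->
  hh nu sigma a <= hh nu sigma b.
Proof.
  intros Hnu Hs Hab; unfold hh.
  pose proof (ww_pos nu sigma Hnu Hs) as Hw.
  pose proof (Rinv_0_lt_compat _ Hw).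
  apply Rmult_le_compat_l; [left; apply cc_pos; auto|].
  assert (a ^ 2 <= b ^ 2).
  { rewrite <- (pow2_abs a), <- (pow2_abs b). pose proof (Rabs_pos a). nra. }
  apply ln_le'. unfold Rdiv; nra. unfold Rdiv; nra.
Qed.

Lemma hh_big nu sigma R0 u : 0 < nu -> 0 < sigma ->
  sqrt (ww nu sigma * exp (R0 / cc nu)) < Rabs u -> R0 < hh nu sigma u.
Proof.
  intros Hnu Hs Hu.
  pose proof (ww_pos nu sigma Hnu Hs) as Hw.
  pose proof (cc_pos nu Hnu) as Hc.
  set (E := exp (R0 / cc nu)) in *.
  assert (HE : 0 < E) by apply exp_pos.
  set (M0 := sqrt (ww nu sigma * E)) in *.
  assert (HM0 : 0 <= M0) by apply sqrt_pos.
  assert (HM2 : M0 * M0 = ww nu sigma * E) by (apply sqrt_sqrt; nra).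
  assert (Hu2 : ww nu sigma * E < u ^ 2).
  { rewrite <- (pow2_abs u). nra. }
  assert (E < 1 + u ^ 2 / ww nu sigma).
  { unfold Rdiv. apply (Rmult_lt_reg_l (ww nu sigma)); auto.
    rewrite Rmult_plus_distr_l, <- Rmult_assoc, (Rmult_comm _ (u^2)), Rmult_assoc, Rinv_r by lra. lra. }
  assert (R0 / cc nu < ln (1 + u ^ 2 / ww nu sigma)).
  { rewrite <- (ln_exp (R0 / cc nu)). apply ln_increasing; auto. }
  unfold hh. apply (Rmult_lt_compat_l (cc nu)) in H0; auto.
  replace (cc nu * (R0 / cc nu)) with R0 in H0 by (field; intro; lra). lra.
Qed.

Lemma rt_bounds nu sigma eps u : 0 < nu -> 0 < sigma -> -1 < eps < 1 ->
  hh nu sigma u <= rt nu sigma eps u <= hh nu sigma u + DD nu eps.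
Proof.
  intros Hnu Hs He.
  destruct (s0_bounds eps He) as [Hs0 Hs1].
  assert (Hsx : forall s, s0 eps <= s <= 2 ->
    hh nu sigma u <= cc nu * ln (1 + (u / sigma) ^ 2 / (nu * s ^ 2)) <= hh nu sigma u + DD nu eps).
  { intros s [Hl Hr].
    pose proof (cc_pos nu Hnu) as Hc.
    assert (Hq : (u / sigma) ^ 2 / (nu * s ^ 2) = u ^ 2 * / (sigma ^ 2 * nu * s ^ 2)).
    { field; repeat split; intro; nra. }
    assert (Hp : u ^ 2 / ww nu sigma = u ^ 2 * / (4 * sigma ^ 2 * nu)).
    { unfold ww; reflexivity. }
    assert (Hpos1 : 0 < sigma ^ 2 * nu * s ^ 2) by (apply Rmult_lt_0_compat; [|nra]; apply Rmult_lt_0_compat; nra).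
    assert (Hlow : u ^ 2 / ww nu sigma <= (u / sigma) ^ 2 / (nu * s ^ 2)).
    { rewrite Hq, Hp. apply Rmult_le_compat_l; [nra|]. apply Rinv_le_contravar; auto.
      assert (s^2 <= 4) by nra. assert (0 < sigma^2*nu) by (apply Rmult_lt_0_compat; nra). nra. }
    assert (Hup : (u / sigma) ^ 2 / (nu * s ^ 2) <= (4 / s0 eps ^ 2) * (u ^ 2 / ww nu sigma)).
    { rewrite Hq, Hp.
      replace (4 / s0 eps ^ 2 * (u ^ 2 * / (4 * sigma ^ 2 * nu))) with
        (u ^ 2 * / (sigma ^ 2 * nu * s0 eps ^ 2)) by (field; repeat split; intro; nra).
      apply Rmult_le_compat_l; [nra|]. apply Rinv_le_contravar.
      apply Rmult_lt_0_compat; [|nra]; apply Rmult_lt_0_compat; nra.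
      assert (s0 eps ^2 <= s^2) by nra. assert (0 < sigma^2*nu) by (apply Rmult_lt_0_compat; nra). nra. }
    assert (H4 : 1 <= 4 / s0 eps ^ 2).
    { unfold Rdiv; apply (Rmult_le_reg_r (s0 eps ^ 2)); [nra|].
      rewrite Rmult_assoc, Rinv_l by nra. nra. }
    assert (Hp0 : 0 <= u ^ 2 / ww nu sigma).
    { unfold Rdiv; apply Rmult_le_pos; [apply pow2_ge_0| left; apply Rinv_0_lt_compat, ww_pos; auto]. }
    unfold hh, DD; split.
    - apply Rmult_le_compat_l; [lra|]. apply ln_le'; lra.
    - rewrite <- Rmult_plus_distr_l. apply Rmult_le_compat_l; [lra|].
      rewrite <- ln_mult by lra. apply ln_le'. lra. nra. }
  unfold rt, rho, sgn. destruct Rle_dec; apply Hsx; unfold s0, Rmin; destruct Rle_dec; lra.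
Qed.

Lemma rt_0 nu sigma eps : rt nu sigma eps 0 = 0.
Proof.
  unfold rt, rho.
  replace ((0 / sigma) ^ 2 / (nu * (1 - sgn (0 / sigma) * eps) ^ 2)) with 0 by (unfold Rdiv; ring).
  rewrite Rplus_0_r, ln_1; ring.
Qed.

Lemma objective_cons nu sigma eps a l t :
  objective nu sigma eps (a :: l) t = rt nu sigma eps (a - t) + objective nu sigma eps l t.
Proof. reflexivity. Qed.

Lemma objective_app nu sigma eps l1 l2 t :
  objective nu sigma eps (l1 ++ l2) t = objective nu sigma eps l1 t + objective nu sigma eps l2 t.
Proof.
  induction l1. cbn [app]. change (objective nu sigma eps nil t) with 0. ring.
  cbn [app]. rewrite !objective_cons, IHl1. ring.
Qed.

Lemma objective_repeat nu sigma eps y m t :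
  objective nu sigma eps (repeat y m) t = INR m * rt nu sigma eps (y - t).
Proof.
  induction m; simpl repeat. change (objective nu sigma eps nil t) with 0. simpl INR. ring.
  rewrite objective_cons, IHm, S_INR. ring.
Qed.

Definition bnd (l : list R) := fold_right (fun x a => Rabs x + a) 0 l.

Lemma bnd_spec l : 0 <= bnd l /\ forall x, In x l -> Rabs x <= bnd l.
Proof.
  induction l as [|a l [IH1 IH2]]; simpl; split.
  - lra.
  - intros x [].
  - pose proof (Rabs_pos a); lra.
  - intros x [->|Hx]. lra. pose proof (IH2 x Hx); pose proof (Rabs_pos a); lra.
Qed.

Lemma partB_ind nu sigma eps B t : 0 < nu -> 0 < sigma -> -1 < eps < 1 -> 0 <= B ->
  forall X X', length X = length X' -> (forall x, In x X -> Rabs x <= B) ->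
  objective nu sigma eps X' t - objective nu sigma eps X' 0 >=
  (INR (length X) - 2 * INR (num_diff X X')) * hh nu sigma t
  - INR (length X) * (2 * hh nu sigma B + KK nu eps).
Proof.
  intros Hnu Hs He HB.
  pose proof (hh_nonneg nu sigma t Hnu Hs) as Ht.
  pose proof (hh_nonneg nu sigma B Hnu Hs) as HhB.
  assert (Hbad : forall y, rt nu sigma eps (y - t) - rt nu sigma eps (y - 0) >=
                   - hh nu sigma t - (2 * hh nu sigma B + KK nu eps)).
  { intros y.
    destruct (rt_bounds nu sigma eps (y - t) Hnu Hs He) as [H1 _].
    destruct (rt_bounds nu sigma eps (y - 0) Hnu Hs He) as [_ H2].
    pose proof (hh_sub nu sigma (y - t) t Hnu Hs).
    replace (y - t + t) with (y - 0) in H by ring.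
    unfold KK. lra. }
  assert (Hgood : forall x, Rabs x <= B -> rt nu sigma eps (x - t) - rt nu sigma eps (x - 0) >=
                   hh nu sigma t - (2 * hh nu sigma B + KK nu eps)).
  { intros x Hx.
    destruct (rt_bounds nu sigma eps (x - t) Hnu Hs He) as [H1 _].
    destruct (rt_bounds nu sigma eps (x - 0) Hnu Hs He) as [_ H2].
    pose proof (hh_sub nu sigma x (- (x - t)) Hnu Hs).
    replace (x + - (x - t)) with t in H by ring. rewrite hh_even in H.
    assert (hh nu sigma x <= hh nu sigma B) by (apply hh_mono; auto; rewrite (Rabs_pos_eq B); auto).
    replace (x - 0) with x in H2 |- * by ring.
    unfold KK. lra. }
  induction X as [|a X IH]; intros [|b X'] Hl HX; simpl in Hl; try discriminate.
  - unfold objective; simpl. lra.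
  - injection Hl as Hl.
    specialize (IH X' Hl (fun x Hx => HX x (or_intror Hx))).
    rewrite !objective_cons. cbn [num_diff length].
    rewrite plus_INR, S_INR.
    destruct (Req_EM_T a b) as [<-|Hne].
    + pose proof (Hgood a (HX a (or_introl eq_refl))). simpl INR. nra.
    + pose proof (Hbad b). simpl INR. nra.
Qed.

Lemma partB nu sigma eps (T : list R -> R) (X : list R) m :
  0 < nu -> 0 < sigma -> -1 < eps < 1 ->
  (forall x : list R, x <> nil -> is_minimizer nu sigma eps x (T x)) ->
  (1 <= length X)%nat -> (2 * m < length X)%nat -> ~ breaks T X m.
Proof.
  intros Hnu Hs He HT Hn Hm Hbr.
  destruct (bnd_spec X) as [HB HXB].
  set (B := bnd X) in *.
  set (n := length X) in *.
  set (R0 := INR n * (2 * hh nu sigma B + KK nu eps)).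
  destruct (Hbr (sqrt (ww nu sigma * exp (R0 / cc nu)))) as [X' [[Hl Hd] Hlt]].
  apply (hh_big nu sigma R0) in Hlt; auto.
  set (t := T X') in *.
  assert (HX' : X' <> nil) by (intros ->; simpl in Hl; lia).
  pose proof (HT X' HX' 0) as Hmin. fold t in Hmin.
  pose proof (partB_ind nu sigma eps B t Hnu Hs He HB X X' (eq_sym Hl) HXB) as H.
  fold n in H.
  assert (Hd2 : (2 * num_diff X X' + 1 <= n)%nat) by lia.
  apply le_INR in Hd2. rewrite plus_INR, mult_INR in Hd2. simpl INR in Hd2.
  pose proof (hh_nonneg nu sigma t Hnu Hs).
  pose proof (hh_nonneg nu sigma B Hnu Hs).
  pose proof (KK_nonneg nu eps Hnu He).
  pose proof (pos_INR n).
  unfold R0 in Hlt. nra.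
Qed.

Lemma num_diff_refl l : num_diff l l = 0%nat.
Proof.
  induction l; simpl; auto. destruct Req_EM_T; [|congruence]. simpl; auto.
Qed.

Lemma num_diff_repl y m : forall X, (num_diff X (repeat y m ++ skipn m X) <= m)%nat.
Proof.
  induction m; intros X; simpl.
  - rewrite num_diff_refl; lia.
  - destruct X; simpl. lia. specialize (IHm X). destruct Req_EM_T; lia.
Qed.

Lemma partA_ind nu sigma eps t y : 0 < nu -> 0 < sigma -> -1 < eps < 1 ->
  forall L, objective nu sigma eps L t - objective nu sigma eps L y >=
    - INR (length L) * (hh nu sigma (y - t) + KK nu eps).
Proof.
  intros Hnu Hs He L.
  induction L as [|x L IH].
  - unfold objective; simpl; lra.
  - rewrite !objective_cons. cbn [length]. rewrite S_INR.
    destruct (rt_bounds nu sigma eps (x - t) Hnu Hs He) as [H1 _].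
    destruct (rt_bounds nu sigma eps (x - y) Hnu Hs He) as [_ H2].
    pose proof (hh_sub nu sigma (x - t) (t - y) Hnu Hs).
    replace (x - t + (t - y)) with (x - y) in H by ring.
    replace (t - y) with (- (y - t)) in H by ring. rewrite hh_even in H.
    unfold KK in *. nra.
Qed.

Lemma partA nu sigma eps (T : list R -> R) (X : list R) m :
  0 < nu -> 0 < sigma -> -1 < eps < 1 ->
  (forall x : list R, x <> nil -> is_minimizer nu sigma eps x (T x)) ->
  (length X < 2 * m)%nat -> (m <= length X)%nat -> breaks T X m.
Proof.
  intros Hnu Hs He HT Hm Hmn M.
  set (L := skipn m X).
  set (R0 := INR (length L) * KK nu eps).
  set (M0 := sqrt (ww nu sigma * exp (R0 / cc nu))).
  set (y := Rabs M + M0 + 1).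
  exists (repeat y m ++ L). split.
  - split. unfold L; rewrite length_app, repeat_length, length_skipn. lia.
    apply num_diff_repl.
  - set (X' := repeat y m ++ L).
    destruct (Rlt_or_le M (Rabs (T X'))) as [Hlt|Hle]; auto. exfalso.
    set (t := T X') in *.
    assert (HX' : X' <> nil).
    { unfold X'; intros Hc. assert (length (repeat y m ++ L) = 0%nat) by (rewrite Hc; auto).
      rewrite length_app, repeat_length in H. lia. }
    pose proof (HT X' HX' y) as Hmin. fold t in Hmin.
    assert (HM0 : 0 <= M0) by apply sqrt_pos.
    assert (Hyt : M0 < Rabs (y - t)).
    { pose proof (Rabs_triang_inv y t). rewrite (Rabs_pos_eq y) in H.
      pose proof (Rle_abs M). unfold y in *; lra. unfold y; pose proof (Rabs_pos M); lra. }
    apply (hh_big nu sigma R0) in Hyt; auto.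
    unfold X' in Hmin. rewrite !objective_app, !objective_repeat in Hmin.
    replace (y - y) with 0 in Hmin by ring. rewrite rt_0 in Hmin.
    pose proof (partA_ind nu sigma eps t y Hnu Hs He L).
    destruct (rt_bounds nu sigma eps (y - t) Hnu Hs He) as [H1 _].
    assert (Hlen : (length L + 1 <= m)%nat) by (unfold L; rewrite length_skipn; lia).
    apply le_INR in Hlen. rewrite plus_INR in Hlen. simpl INR in Hlen.
    pose proof (hh_nonneg nu sigma (y - t) Hnu Hs).
    pose proof (KK_nonneg nu eps Hnu He).
    pose proof (pos_INR (length L)).
    unfold R0 in Hyt. nra.
Qed.

Lemma least_nat (P : nat -> Prop) k : P k -> exists m, P m /\ forall j, (j < m)%nat -> ~ P j.
Proof.
  revert k. intro k. induction k as [k IH] using (well_founded_induction lt_wf). intros Hk.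
  destruct (classic (exists j, (j < k)%nat /\ P j)) as [[j [Hj Pj]]|Hn].
  - exact (IH j Hj Pj).
  - exists k; split; auto. intros j Hj Pj; apply Hn; eauto.
Qed.

Lemma half_exists n : exists j, (n < 2 * j <= n + 2)%nat.
Proof.
  induction n. exists 1%nat; lia.
  destruct IHn as [j Hj]. destruct (Nat.eq_dec (2 * j) (n + 2)).
  exists j; lia. exists (S j); lia.
Qed.

Theorem corollary3p6 (nu sigma eps : R)
  (Hnu : 0 < nu) (Hsigma : 0 < sigma) (Heps : -1 < eps < 1)
  (T : list R -> R)
  (HT : forall x : list R, x <> nil -> is_minimizer nu sigma eps x (T x))
  (X : nat -> list R) (HX : forall n, length (X n) = n) :
  exists bd : nat -> nat,
    (forall n, (1 <= n)%nat -> breakdown_count T (X n) (bd n)) /\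
    Un_cv (fun n => INR (bd n) / INR n) (1 / 2).
Proof.
  assert (Hex : forall n, exists b, (1 <= n)%nat ->
     breakdown_count T (X n) b /\ (n <= 2 * b <= n + 2)%nat).
  { intros n. destruct (le_lt_dec 1 n) as [Hn|Hn]; [|exists 0%nat; lia].
    destruct (half_exists n) as [j Hj].
    assert (Pj : breaks T (X n) j) by (apply (partA nu sigma eps); auto; rewrite HX; lia).
    destruct (least_nat _ _ Pj) as [m [Pm Hleast]].
    exists m; intros _; split; [split; auto|].
    split.
    - destruct (le_lt_dec n (2 * m)) as [H|H]; auto.
      exfalso; apply (partB nu sigma eps T (X n) m); auto; rewrite HX; lia.
    - destruct (le_lt_dec m j) as [H|H]; [lia|].
      exfalso; apply (Hleast j H Pj). }
  exists (fun n => proj1_sig (constructive_indefinite_description _ (Hex n))).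
  split.
  - intros n Hn. destruct (constructive_indefinite_description _ (Hex n)) as [b Hb]; simpl.
    apply Hb; auto.
  - intros e He.
    destruct (archimed_cor1 e He) as [N [HN HN0]].
    exists N. intros n Hn. unfold R_dist.
    destruct (constructive_indefinite_description _ (Hex n)) as [b Hb]; simpl.
    destruct (Hb ltac:(lia)) as [_ [H1 H2]].
    apply le_INR in H1; apply le_INR in H2.
    rewrite mult_INR, plus_INR in *. simpl INR in H1, H2.
    assert (Hnpos : 0 < INR n) by (apply lt_0_INR; lia).
    assert (HNpos : 0 < INR N) by (apply lt_0_INR; lia).
    assert (HNn : INR N <= INR n) by (apply le_INR; lia).
    assert (Hinv : / INR n <= / INR N) by (apply Rinv_le_contravar; auto).
    assert (Hi : INR n * / INR n = 1) by (apply Rinv_r; lra).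
    assert (0 < / INR n) by (apply Rinv_0_lt_compat; auto).
    rewrite Rabs_pos_eq.
    + unfold Rdiv. nra.
    + unfold Rdiv. nra.
Qed.
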